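(* Let $m, n_0, n_1$ be positive integers and $n(\lambda) = n_0 + n_1\lambda$. If nonzero polynomials $x(\lambda), y(\lambda), z(\lambda) \in \mathbb{Q}[\lambda]$ satisfy $$\frac{m}{n(\lambda)} = \frac{1}{x(\lambda)} + \frac{1}{y(\lambda)} + \frac{1}{z(\lambda)}$$ identically, then at least one of $x, y, z$ has degree $1$.
   Context: $\lambda$ is an indeterminate; the equation is an identity of rational functions in $\lambda$. *)

(* Defs.v *)
From mathcomp Require Import all_boot all_order all_algebra.
From mathcomp Require Import fraction.
Set Implicit Arguments. Unset Strict Implicit. Unset Printing Implicit Defensive.
Import GRing.Theory.
Local Open Scope ring_scope.

Definition ratfun (p : {poly rat}) : {fraction {poly rat}} := @FracField.tofrac _ p.

(* Main.v *)
Require Import Defs.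
From mathcomp Require Import all_boot all_order all_algebra.
From mathcomp Require Import fraction ring zify.
Import GRing.Theory Num.Theory.
Local Open Scope ring_scope.

Lemma fld (F : fieldType) (N X Y Z : F) : X != 0 -> Y != 0 -> Z != 0 ->
  N * (X^-1 + Y^-1 + Z^-1) * X * Y * Z = N * (Y * Z + X * Z + X * Y).
Proof. move=> hx hy hz; field. by rewrite hx hy hz. Qed.

Lemma polyeq (M N x y z : {poly rat}) :
  N != 0 -> x != 0 -> y != 0 -> z != 0 ->
  ratfun M / ratfun N = (ratfun x)^-1 + (ratfun y)^-1 + (ratfun z)^-1 ->
  M * x * y * z = N * (y * z + x * z + x * y).
Proof.
move=> nN nx ny nz H.
have nz0 p : p != 0 -> ratfun p != 0.
  by move=> hp; rewrite /ratfun -tofrac0 tofrac_eq.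
apply/eqP; rewrite -(tofrac_eq (R:={poly rat})); apply/eqP.
rewrite !(tofracM, tofracD).
have hN := nz0 _ nN; have hx := nz0 _ nx; have hy := nz0 _ ny; have hz := nz0 _ nz.
rewrite /ratfun in H hN hx hy hz.
have -> : tofrac M = tofrac N * ((tofrac x)^-1 + (tofrac y)^-1 + (tofrac z)^-1) :> {fraction {poly rat}}.
  by rewrite -H mulrC (divfK hN).
exact: fld _ hx hy hz.
Qed.

Ltac revnat := repeat match goal with
 | H : is_true (leq _ _) |- _ => revert H
 | H : @eq nat _ _ |- _ => revert H
 | H : not (@eq nat _ _) |- _ => revert H
 end.
Ltac fs := revnat; repeat (match goal with
  | |- context [@size _ (@polyseq _ ?p)] => let s := fresh "s" in set s := size p
  end).
Ltac flia := fs; lia.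

Definition Eq (k : rat) (N x y z : {poly rat}) :=
  k%:P * x * y * z = N * (y * z + x * z + x * y).

Lemma Eq12 {k N x y z} : Eq k N x y z -> Eq k N y x z.
Proof.
rewrite /Eq => E.
have -> : k%:P * y * x * z = k%:P * x * y * z by ring.
rewrite E; ring.
Qed.

Lemma Eq23 {k N x y z} : Eq k N x y z -> Eq k N x z y.
Proof.
rewrite /Eq => E.
have -> : k%:P * x * z * y = k%:P * x * y * z by ring.
rewrite E; ring.
Qed.

Lemma const1 {p : {poly rat}} : p != 0 -> size p = 1%N -> exists2 a, a != 0 & p = a%:P.
Proof.
move=> p0 sp; exists p`_0; last by apply: size1_polyC; rewrite sp.
by apply: contraNneq p0 => h; rewrite (size1_polyC (eq_leq sp)) h.
Qed.

Lemma twoconst (k a b : rat) (N z : {poly rat}) :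
  k != 0 -> a != 0 -> b != 0 -> z != 0 -> size N = 2%N ->
  k%:P * a%:P * b%:P * z = N * (b%:P * z + a%:P * z + a%:P * b%:P) ->
  size z = 2%N.
Proof.
move=> k0 a0 b0 z0 sN E.
have aP : a%:P != 0 by rewrite polyC_eq0.
have bP : b%:P != 0 by rewrite polyC_eq0.
have N0 : N != 0 by rewrite -size_poly_eq0 sN.
have sL : size (k%:P * a%:P * b%:P * z) = size z.
  by rewrite -!polyCM size_Cmul // !mulf_neq0.
have [s0|s0] := eqVneq (a + b) 0.
  have hb : b = - a by apply/eqP; rewrite -(subr_eq0 b) opprK addrC s0.
  subst b.
  have H : (a%:P * (- a)%:P) * (k%:P * z - N) = 0.
    rewrite (_ : _ * _ = k%:P * a%:P * (- a)%:P * z -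
        N * ((- a)%:P * z + a%:P * z + a%:P * (- a)%:P)); first by rewrite E subrr.
    rewrite polyCN; ring.
  move/eqP: H; rewrite mulf_eq0 mulf_eq0 (negbTE aP) polyCN oppr_eq0 (negbTE aP) /= subr_eq0.
  by move=> /eqP; rewrite -sN => <-; rewrite size_Cmul.
have T : b%:P * z + a%:P * z + a%:P * b%:P = (a + b)%:P * z + (a * b)%:P.
  by rewrite polyCD polyCM; ring.
rewrite T in E.
have T0 : (a + b)%:P * z + (a * b)%:P != 0.
  apply: contraTneq isT => h; move: E; rewrite h mulr0 => /eqP.
  by rewrite -size_poly_eq0 sL size_poly_eq0 (negbTE z0).
have := congr1 (fun p : {poly rat} => size p) E; rewrite /=; rewrite sL size_mul // sN.
have sz : (0 < size z)%N by rewrite size_poly_gt0.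
case: (leqP (size z) 1) => h.
  rewrite add2n /= => e.
  by move: h; rewrite e ltnS leqn0 size_poly_eq0 (negbTE T0).
rewrite size_polyDl; last by rewrite size_Cmul //; apply: leq_ltn_trans (size_polyC_leq1 _) h.
rewrite size_Cmul // add2n /= => e.
exfalso; exact: (n_Sn _ e).
Qed.

Lemma Lmin {k : rat} {N x y z : {poly rat}} : k != 0 -> size N = 2%N -> x != 0 -> y != 0 -> z != 0 ->
  (size x <= size y)%N -> (size x <= size z)%N -> Eq k N x y z ->
  (size x == 2%N) || (size y == 2%N) || (size z == 2%N).
Proof.
move=> k0 sN x0 y0 z0 hxy hxz E.
have N0 : N != 0 by rewrite -size_poly_eq0 sN.
have kP : k%:P != 0 by rewrite polyC_eq0.
have L0 : k%:P * x * y * z != 0 by rewrite !mulf_neq0.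
have S0 : y * z + x * z + x * y != 0.
  by apply: contraNneq L0 => h; rewrite E h mulr0.
have eL : size (k%:P * x * y * z) = (size x + (size y + size z).-1).-1.
  by rewrite -!mulrA size_Cmul ?size_mul ?mulf_neq0.
have eR := congr1 (fun p : {poly rat} => size p) E; rewrite /= eL (size_mul N0 S0) sN add2n /= in eR.
have bS : (size (y * z + x * z + x * y)%R <= (size y + size z).-1)%N.
  apply: leq_trans (size_polyD _ _) _; rewrite geq_max; apply/andP; split.
    apply: leq_trans (size_polyD _ _) _; rewrite geq_max !size_mul //; apply/andP; split; flia.
  rewrite size_mul //; flia.
have px : (0 < size x)%N by rewrite size_poly_gt0.
have py : (0 < size y)%N by rewrite size_poly_gt0.
have pz : (0 < size z)%N by rewrite size_poly_gt0.
have [//|sx2] := eqVneq (size x) 2%N.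
move/eqP in sx2.
have sx1 : size x = 1%N by flia.
have [a a0 xa] := const1 (p:=x) x0 sx1.
have [sy1|sy1] := eqVneq (size y) 1%N.
  have [b b0 yb] := const1 (p:=y) y0 sy1.
  have hz : size z = 2%N.
    by apply: (@twoconst k a b N z k0 a0 b0 z0 sN); move: E; rewrite /Eq xa yb.
  by rewrite hz orbT.
have [sz1|sz1] := eqVneq (size z) 1%N.
  have [c c0 zc] := const1 (p:=z) z0 sz1.
  have hy : size y = 2%N.
    by apply: (@twoconst k a c N y k0 a0 c0 y0 sN); move: (Eq23 E); rewrite /Eq xa zc.
  by rewrite hy orbT.
exfalso.
move: eR; rewrite -addrA size_polyDl.
  rewrite size_mul //; flia.
apply: leq_ltn_trans (size_polyD _ _) _.
rewrite xa !size_Cmul // size_mul //; rewrite gtn_max; apply/andP; split; flia.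
Qed.

Lemma sizeN (n0 n1 : nat) : (0 < n1)%N -> size (n0%:R%:P + n1%:R *: 'X : {poly rat}) = 2%N.
Proof.
move=> h; rewrite addrC -mul_polyC size_MXaddC polyC_eq0 pnatr_eq0 size_polyC !pnatr_eq0.
by case: n1 h.
Qed.

Theorem lemma1 (m n0 n1 : nat) (x y z : {poly rat}) :
  (0 < m)%N -> (0 < n0)%N -> (0 < n1)%N ->
  x != 0 -> y != 0 -> z != 0 ->
  ratfun (m%:R)%:P / ratfun (n0%:R%:P + n1%:R *: 'X)
    = (ratfun x)^-1 + (ratfun y)^-1 + (ratfun z)^-1 ->
  (size x == 2)%N || (size y == 2)%N || (size z == 2)%N.
Proof.
move=> m0 _ n10 x0 y0 z0 H.
have sN := @sizeN n0 n1 n10.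
have N0 : (n0%:R%:P + n1%:R *: 'X : {poly rat}) != 0 by rewrite -size_poly_eq0 sN.
have k0 : (m%:R : rat) != 0 by rewrite pnatr_eq0 -lt0n.
have E : Eq m%:R (n0%:R%:P + n1%:R *: 'X) x y z by exact: polyeq N0 x0 y0 z0 H.
have [hxy|hyx] := leqP (size x) (size y).
  have [hxz|hzx] := leqP (size x) (size z).
    exact: (Lmin (N:=_) (x:=x) (y:=y) (z:=z) k0 sN x0 y0 z0 hxy hxz E).
  have := Lmin k0 sN z0 x0 y0 (ltnW hzx) (leq_trans (ltnW hzx) hxy) (Eq12 (Eq23 E)).
  by case: (size x == 2)%N; case: (size y == 2)%N; case: (size z == 2)%N.
have [hyz|hzy] := leqP (size y) (size z).
  have := Lmin k0 sN y0 x0 z0 (ltnW hyx) hyz (Eq12 E).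
  by case: (size x == 2)%N; case: (size y == 2)%N; case: (size z == 2)%N.
have := Lmin k0 sN z0 x0 y0 (ltnW (ltn_trans hzy hyx)) (ltnW hzy) (Eq12 (Eq23 E)).
by case: (size x == 2)%N; case: (size y == 2)%N; case: (size z == 2)%N.
Qed.
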